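(* Let $\mathcal{I}\in\mathrm{Ins}(\Omega,\mathcal{H},\mathcal{K})$ be an indecomposable instrument. Then every instrument $\mathcal{J}\in\mathrm{Ins}(\Lambda,\mathcal{H},\mathcal{V})$ that is compatible with $\mathcal{I}$ is of the form $\mathcal{J}_y(\varrho)=\sum_{x\in\Omega}\mathrm{tr}[\nu_{xy}\mathsf{A}^{\mathcal{I}}(x)\varrho]\,\xi_{xy}$ for all $y\in\Lambda$ and states $\varrho$, for some family of states $\{\xi_{xy}\}_{x\in\Omega,y\in\Lambda}$ on $\mathcal{V}$ and some stochastic matrix $\nu=(\nu_{xy})_{x\in\Omega,y\in\Lambda}$ (i.e. $\nu_{xy}\ge 0$ and $\sum_y\nu_{xy}=1$ for all $x$).
   Context: All Hilbert spaces are finite-dimensional and complex, and all outcome sets are finite. An instrument $\mathcal{I}\in\mathrm{Ins}(\Omega,\mathcal{H},\mathcal{K})$ is a family $(\mathcal{I}_x)_{x\in\Omega}$ of completely positive trace-nonincreasing linear maps $\mathcal{L}(\mathcal{H})\to\mathcal{L}(\mathcal{K})$ whose sum is trace preserving; its induced POVM is given by $\mathrm{tr}[\mathsf{A}^{\mathcal{I}}(x)\varrho]=\mathrm{tr}[\mathcal{I}_x(\varrho)]$. $\mathcal{I}$ is indecomposable if each nonzero $\mathcal{I}_x$ has Kraus rank 1, i.e. $\mathcal{I}_x(\varrho)=K_x\varrho K_x^*$ for some operator $K_x:\mathcal{H}\to\mathcal{K}$. Two instruments $\mathcal{I}\in\mathrm{Ins}(\Omega,\mathcal{H},\mathcal{K})$,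 $\mathcal{J}\in\mathrm{Ins}(\Lambda,\mathcal{H},\mathcal{V})$ are compatible if there is $\mathcal{G}\in\mathrm{Ins}(\Omega\times\Lambda,\mathcal{H},\mathcal{K}\otimes\mathcal{V})$ with $\sum_{x}\mathrm{tr}_{\mathcal{K}}[\mathcal{G}_{(x,y)}(\varrho)]=\mathcal{J}_y(\varrho)$ for all $y$ and $\sum_y\mathrm{tr}_{\mathcal{V}}[\mathcal{G}_{(x,y)}(\varrho)]=\mathcal{I}_x(\varrho)$ for all $x$, for all states $\varrho$. *)

(* Defs.v *)
From HB Require Import structures.
From mathcomp Require Import all_boot all_order all_algebra all_field.
Set Implicit Arguments. Unset Strict Implicit. Unset Printing Implicit Defensive.
Import Order.TTheory GRing.Theory Num.Theory.
Local Open Scope ring_scope.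

(* The Hilbert space C^n is represented by its dimension n; L(C^n) = 'M[algC]_n. *)
Notation Mat n := 'M[algC]_n.

Definition adjmx m n (A : 'M[algC]_(m, n)) : 'M[algC]_(n, m) :=
  \matrix_(i, j) (A j i)^*.

Definition psd n (A : Mat n) : Prop :=
  forall v : 'cV[algC]_n, 0 <= (adjmx v *m A *m v) 0 0.

Definition state n (rho : Mat n) : Prop := psd rho /\ \tr rho = 1.

Definition linmap n m (f : Mat n -> Mat m) : Prop :=
  forall (a : algC) (A B : Mat n), f (a *: A + B) = a *: f A + f B.

(* Tensor product convention: the basis vector e_i (x) e_a of C^k (x) C^n is
   the index mxvec_index i a of C^(k*n). *)

(* the (i,j) block <i|X|j> in L(C^n) of X in L(C^k (x) C^n) *)
Definition blk k n (X : Mat (k * n)) (i j : 'I_k) : Mat n :=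
  \matrix_(a, b) X (mxvec_index i a) (mxvec_index j b).

(* |i><j| (x) Y *)
Definition embblk k n (i j : 'I_k) (Y : Mat n) : Mat (k * n) :=
  \matrix_(p, q) \sum_(a < n) \sum_(b < n)
     ((p == mxvec_index i a) && (q == mxvec_index j b))%:R * Y a b.

(* id_k (x) f *)
Definition ampl k n m (f : Mat n -> Mat m) (X : Mat (k * n)) : Mat (k * m) :=
  \sum_(i < k) \sum_(j < k) embblk i j (f (blk X i j)).

Definition cp n m (f : Mat n -> Mat m) : Prop :=
  forall k (X : Mat (k * n)), psd X -> psd (ampl f X).

Definition trace_nonincr n m (f : Mat n -> Mat m) : Prop :=
  forall X : Mat n, psd X -> \tr (f X) <= \tr X.

Definition instrument (Omega : finType) h k (I : Omega -> Mat h -> Mat k) : Prop :=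
  (forall x, [/\ linmap (I x), cp (I x) & trace_nonincr (I x)]) /\
  (forall X : Mat h, \tr (\sum_x I x X) = \tr X).

Definition induced_povm (Omega : finType) h k (I : Omega -> Mat h -> Mat k)
  (A : Omega -> Mat h) : Prop :=
  forall x (rho : Mat h), state rho -> \tr (A x *m rho) = \tr (I x rho).

(* indecomposable: each nonzero I_x has Kraus rank 1 *)
Definition indecomposable (Omega : finType) h k (I : Omega -> Mat h -> Mat k) : Prop :=
  forall x, (exists rho : Mat h, I x rho != 0) ->
    exists K : 'M[algC]_(k, h), forall rho : Mat h, I x rho = K *m rho *m adjmx K.

Definition ptr1 k v (X : Mat (k * v)) : Mat v :=
  \matrix_(a, b) \sum_(i < k) X (mxvec_index i a) (mxvec_index i b).
Definition ptr2 k v (X : Mat (k * v)) : Mat k :=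
  \matrix_(i, j) \sum_(a < v) X (mxvec_index i a) (mxvec_index j a).

Definition compatible (Omega Lambda : finType) h k v
  (I : Omega -> Mat h -> Mat k) (J : Lambda -> Mat h -> Mat v) : Prop :=
  exists G : (Omega * Lambda)%type -> Mat h -> Mat (k * v),
    instrument G /\
    (forall y (rho : Mat h), state rho -> \sum_x ptr1 (G (x, y) rho) = J y rho) /\
    (forall x (rho : Mat h), state rho -> \sum_y ptr2 (G (x, y) rho) = I x rho).

(* Main.v *)
Require Import Defs.
From HB Require Import structures.
From mathcomp Require Import all_boot all_order all_algebra all_field.
From mathcomp Require Import ring.
From Stdlib Require Import IndefiniteDescription Classical_Prop.
Import Order.TTheory GRing.Theory Num.Theory.
Local Open Scope ring_scope.

Section Form.
Variable T : finType.
Implicit Types (P : T -> T -> algC) (w z : T -> algC).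

Definition form P w z := \sum_s \sum_t (w s)^* * P s t * z t.
Definition posf P := forall w, 0 <= form P w w.
Definition dlt (s0 : T) : T -> algC := fun s => (s == s0)%:R.

Lemma formDr P w a z1 z2 :
  form P w (fun t => a * z1 t + z2 t) = a * form P w z1 + form P w z2.
Proof.
rewrite /form big_distrr -big_split /=; apply: eq_bigr => s _.
rewrite big_distrr -big_split /=; apply: eq_bigr => t _; ring.
Qed.

Lemma formDl P z a w1 w2 :
  form P (fun s => a * w1 s + w2 s) z = a^* * form P w1 z + form P w2 z.
Proof.
rewrite /form big_distrr -big_split /=; apply: eq_bigr => s _.
rewrite big_distrr -big_split /=; apply: eq_bigr => t _.
rewrite rmorphD rmorphM /=; ring.
Qed.

Lemma form_dlt P s0 t0 : form P (dlt s0) (dlt t0) = P s0 t0.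
Proof.
rewrite /form (bigD1 s0) //= [X in _ + X]big1; last first.
  move=> s hs; rewrite /dlt (negbTE hs).
  by apply: big1 => t _; rewrite rmorph0 !mul0r.
rewrite addr0 (bigD1 t0) //= [X in _ + X]big1; last first.
  by move=> t ht; rewrite /dlt (negbTE ht) mulr0.
by rewrite /dlt !eqxx rmorph1 mul1r mulr1 !addr0.
Qed.

Lemma real_conj {x : algC} : 0 <= x -> x^* = x.
Proof. by move=> /ger0_real; apply: conj_Creal. Qed.

Lemma posf_herm P : posf P -> forall s t, P s t = (P t s)^*.
Proof.
move=> pos s t.
have key : forall l : algC, 0 <= l^* * (l * P t t + P t s) + (l * P s t + P s s).
  move=> l; have := pos (fun u => l * dlt t u + dlt s u).
  by rewrite formDl !formDr !form_dlt.
have Ps : (P s s)^* = P s s by apply: real_conj; have := pos (dlt s); rewrite form_dlt.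
have Pt : (P t t)^* = P t t by apply: real_conj; have := pos (dlt t); rewrite form_dlt.
have e1 := real_conj (key 1).
have e2 := real_conj (key 'i).
rewrite rmorph1 !mul1r !rmorphD !rmorphM /= Ps Pt conjCK in e1 e2.
rewrite conjCi in e2.
rewrite !rmorphD !rmorphM /= conjCi Pt in e2.
have f1 : (P t s)^* + (P s t)^* = P t s + P s t.
  transitivity ((P t t + (P t s)^* + ((P s t)^* + P s s)) - P t t - P s s); first ring.
  by rewrite e1; ring.
have f2 : 'i * ((P t s)^* - (P s t)^*) = 'i * (P s t - P t s).
  transitivity ('i * (- 'i * P t t + (P t s)^*) + (- 'i * (P s t)^* + P s s)
     + 'i * 'i * P t t - P s s); first ring.
  by rewrite e2; ring.
have f3 : (P t s)^* - (P s t)^* = P s t - P t s.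
  by apply: (mulfI (neq0Ci algC)).
have : (P s t) *+ 2 = (P t s)^* *+ 2.
  transitivity ((P t s + P s t) + (P s t - P t s)); first by ring.
  by rewrite -f1 -f3; ring.
by move/(pmulrnI (isT : (0 < 2)%N)).
Qed.
Lemma formC P w z : posf P -> form P w z = (form P z w)^*.
Proof.
move=> pos; rewrite /form [RHS]rmorph_sum /=.
under [RHS]eq_bigr do rewrite rmorph_sum.
rewrite [RHS]exchange_big /=; apply: eq_bigr => s _; apply: eq_bigr => t _.
by rewrite !rmorphM /= conjCK (posf_herm _ pos s t); ring.
Qed.

Lemma form_kernel P w : posf P -> form P w w = 0 -> forall z, form P z w = 0.
Proof.
move=> pos h0 z.
set b := form P z w; set q := form P z z.
have q0 : 0 <= q by apply: pos.
have q1 : q + 1 != 0 by rewrite gt_eqF // ltr_wpDl.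
set r := (q + 1)^-1.
have rc : r^* = r.
  by rewrite /r fmorphV /= rmorphD rmorph1 /=; congr (_ + 1)^-1; exact: real_conj q0.
have := pos (fun u => (- b * r) * z u + w u).
rewrite formDl !formDr h0 -/b -/q (formC _ _ _ pos) -/b.
rewrite !rmorphM /= rmorphN rc.
have -> : (- b^* * r) * ((- b * r) * q + b) + ((- b * r) * b^* + 0)
   = - ((b * b^*) * (r * r * (q + 2%:R))).
  rewrite /r; field; done.
rewrite oppr_ge0 pmulr_lle0; last first.
  apply: mulr_gt0; first by apply: mulr_gt0; rewrite /r invr_gt0 ltr_wpDl.
  by rewrite ltr_wpDl.
move=> hle; have : b * b^* = 0 by apply/eqP; rewrite eq_le hle mul_conjC_ge0.
by move/eqP; rewrite mul_conjC_eq0 => /eqP.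
Qed.
End Form.
Arguments form {T} P w z.
Arguments posf {T} P.
Arguments dlt {T} s0 _.
Arguments posf_herm {T}.
Arguments formC {T}.
Arguments form_kernel {T}.

Lemma mxvec_index_inj m n (i j : 'I_m) (a b : 'I_n) :
  mxvec_index i a = mxvec_index j b -> i = j /\ a = b.
Proof.
move=> e.
have := bij_inj (onT_bij (curry_mxvec_bij m n)) (x1:=(i,a)) (x2:=(j,b)) e.
by case=> -> ->.
Qed.

Lemma mxvec_index_eq m n (i j : 'I_m) (a b : 'I_n) :
  (mxvec_index i a == mxvec_index j b) = (i == j) && (a == b).
Proof.
apply/eqP/andP => [/mxvec_index_inj [-> ->] //|[/eqP -> /eqP ->] //].
Qed.

Lemma sum_mxvec m n (F : 'I_(m * n) -> algC) :
  \sum_p F p = \sum_i \sum_j F (mxvec_index i j).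
Proof.
rewrite pair_big /=.
rewrite (reindex (uncurry (@mxvec_index m n))) /=.
  by apply: eq_bigr => -[i j].
apply: onW_bij; apply: onT_bij; exact: curry_mxvec_bij.
Qed.

Lemma sum_dlt (T : finType) (p : T) (F : T -> algC) :
  \sum_a (a == p)%:R * F a = F p.
Proof.
rewrite (bigD1 p) //= big1 ?eqxx ?mul1r ?addr0 // => a /negbTE ->; by rewrite mul0r.
Qed.

Lemma sum_dlt' (T : finType) (p : T) (F : T -> algC) :
  \sum_a (p == a)%:R * F a = F p.
Proof. by under eq_bigr do rewrite eq_sym; apply: sum_dlt. Qed.

Lemma form_ext (T : finType) (P : T -> T -> algC) w z w' z' :
  (forall p, w p = w' p) -> (forall p, z p = z' p) -> form P w z = form P w' z'.
Proof.
by move=> e1 e2; apply: eq_bigr => s _; apply: eq_bigr => t _; rewrite e1 e2.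
Qed.

Arguments sum_dlt {T}.
Arguments sum_dlt' {T}.

Lemma psd_formE n (M : Mat n) (v : 'cV[algC]_n) :
  (adjmx v *m M *m v) 0 0 = form (fun p q => M p q) (fun p => v p 0) (fun p => v p 0).
Proof.
rewrite /form mxE; under eq_bigr do rewrite mxE big_distrl /=.
rewrite exchange_big /=; apply: eq_bigr => p _.
by apply: eq_bigr => q _; rewrite !mxE.
Qed.

Lemma psd_posf n (M : Mat n) : psd M <-> posf (fun p q => M p q).
Proof.
split=> [h w|h v]; last by rewrite psd_formE; apply: h.
have := h (\col_p w p); rewrite psd_formE.
by rewrite (@form_ext _ _ _ _ w w) // => p; rewrite mxE.
Qed.

Section Lin.
Variables n m : nat.
Variable f : Mat n -> Mat m.
Hypothesis hf : linmap f.

Lemma lin0 : f 0 = 0.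
Proof.
have e := hf 1 0 0; rewrite !scale1r addr0 in e.
by apply: (addrI (f 0)); rewrite addr0 -e.
Qed.

Lemma linD A B : f (A + B) = f A + f B.
Proof. by have := hf 1 A B; rewrite !scale1r. Qed.

Lemma linZ a A : f (a *: A) = a *: f A.
Proof. by have := hf a A 0; rewrite !addr0 lin0 addr0. Qed.

Lemma lin_sum (I : Type) (r : seq I) (P : pred I) (F : I -> Mat n) :
  f (\sum_(i <- r | P i) F i) = \sum_(i <- r | P i) f (F i).
Proof. exact: (big_morph f linD lin0). Qed.

Lemma lin_expand X : f X = \sum_i \sum_j X i j *: f (delta_mx i j).
Proof.
rewrite {1}(matrix_sum_delta X) lin_sum; apply: eq_bigr => i _.
by rewrite lin_sum; apply: eq_bigr => j _; rewrite linZ.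
Qed.
End Lin.

Lemma linmap_sum (I : finType) n m (F : I -> Mat n -> Mat m) :
  (forall i, linmap (F i)) -> linmap (fun X => \sum_i F i X).
Proof.
move=> hF a A B; rewrite scaler_sumr -big_split /=; apply: eq_bigr => i _.
exact: hF.
Qed.

Lemma delta_mxE n m (i p : 'I_n) (j q : 'I_m) :
  delta_mx i j p q = (p == i)%:R * (q == j)%:R :> algC.
Proof. by rewrite mxE -natrM mulnb. Qed.

Lemma andb_natr (a b : bool) : ((a && b)%:R : algC) = a%:R * b%:R.
Proof. by rewrite -natrM mulnb. Qed.

Definition R1 n (w : 'I_n -> algC) : Mat n := \matrix_(p, q) (w p * (w q)^*).
Arguments R1 {n}.

Lemma form_R1 n (w u : 'I_n -> algC) :
  form (fun p q => R1 w p q) u u =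
  (\sum_p (u p)^* * w p) * (\sum_p (u p)^* * w p)^*.
Proof.
rewrite /form rmorph_sum big_distrl /=; apply: eq_bigr => p _.
rewrite big_distrr /=; apply: eq_bigr => q _.
by rewrite mxE rmorphM /= (conjCK (u q)); ring.
Qed.

Lemma psd_R1 n (w : 'I_n -> algC) : psd (R1 w).
Proof. by apply/psd_posf => u; rewrite form_R1 mul_conjC_ge0. Qed.

Lemma form_scale n (M : Mat n) (c : algC) u :
  form (fun p q => (c *: M) p q) u u = c * form (fun p q => M p q) u u.
Proof.
rewrite /form big_distrr; apply: eq_bigr => p _.
rewrite big_distrr; apply: eq_bigr => q _; rewrite mxE /=; ring.
Qed.

Lemma tr_R1 n (w : 'I_n -> algC) : \tr (R1 w) = \sum_p w p * (w p)^*.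
Proof. by apply: eq_bigr => p _; rewrite mxE. Qed.

Lemma tr_R1_ge0 n (w : 'I_n -> algC) : 0 <= \tr (R1 w).
Proof. by rewrite tr_R1 sumr_ge0 // => p _; rewrite mul_conjC_ge0. Qed.

Lemma state_R1 n (w : 'I_n -> algC) :
  \tr (R1 w) != 0 -> state ((\tr (R1 w))^-1 *: R1 w).
Proof.
move=> t0; split; last by rewrite mxtraceZ mulVf.
apply/psd_posf => u; rewrite form_scale mulr_ge0 //.
  by rewrite invr_ge0 tr_R1_ge0.
by have /psd_posf := psd_R1 _ w; apply.
Qed.

Lemma R1_dlt n (i j : 'I_n) (l : algC) :
  R1 (fun p => l * dlt j p + dlt i p) =
  delta_mx i i + l^* *: delta_mx i j + l *: delta_mx j i + (l * l^*) *: delta_mx j j.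
Proof.
apply/matrixP => p q; rewrite !mxE /dlt !andb_natr rmorphD rmorphM !rmorph_nat.
ring.
Qed.

Lemma lin_zero_states n m (f : Mat n -> Mat m) :
  linmap f -> (forall rho, state rho -> f rho = 0) ->
  forall i j, f (delta_mx i j) = 0.
Proof.
move=> hf h0.
have fR : forall w, f (R1 w) = 0.
  move=> w; case: (eqVneq (\tr (R1 w)) 0) => [t0|t0].
    have w0 : forall p, w p = 0.
      move=> p; move: t0; rewrite tr_R1 => /psumr_eq0P h.
      have /eqP := h (fun q _ => mul_conjC_ge0 (w q)) p isT.
      by rewrite mul_conjC_eq0 => /eqP.
    have -> : R1 w = (0 : Mat n) by apply/matrixP => p q; rewrite !mxE w0 mul0r.
    exact: lin0.
  have -> : R1 w = (\tr (R1 w)) *: ((\tr (R1 w))^-1 *: R1 w).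
    by rewrite scalerA mulfV // scale1r.
  by rewrite linZ // h0 ?scaler0 //; apply: state_R1.
have Ed : forall i, R1 (dlt i) = (delta_mx i i : Mat n).
  by move=> i; apply/matrixP => p q; rewrite !mxE /dlt andb_natr rmorph_nat.
move=> i j.
have key : forall l, l^* *: f (delta_mx i j) + l *: f (delta_mx j i) = 0.
  move=> l; have := fR (fun p => l * dlt j p + dlt i p).
  rewrite R1_dlt !(linD _ _ _ hf) !(linZ _ _ _ hf) -!Ed !fR !scaler0 add0r addr0.
  by move=> ->.
apply/matrixP => a b; rewrite mxE.
have k1 := congr1 (fun M : Mat m => M a b) (key 1).
have k2 := congr1 (fun M : Mat m => M a b) (key 'i).
rewrite /= !mxE rmorph1 !mul1r in k1.
rewrite /= !mxE conjCi in k2.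
set x := f (delta_mx i j) a b in k1 k2 *; set y := f (delta_mx j i) a b in k1 k2.
have yx : y = x.
  apply: (mulfI (neq0Ci algC)); apply/eqP; rewrite -subr_eq0; apply/eqP.
  by rewrite -k2; ring.
have : x *+ 2 = 0 *+ 2 by rewrite mul0rn -k1 yx; ring.
by move/(pmulrnI (isT : (0 < 2)%N)).
Qed.

Lemma embblk_entry k n (i' j' i j : 'I_k) (p q : 'I_n) (Y : Mat n) :
  embblk i' j' Y (mxvec_index i p) (mxvec_index j q) =
  (i == i')%:R * (j == j')%:R * Y p q.
Proof.
rewrite mxE.
under eq_bigr do under eq_bigr do rewrite !mxvec_index_eq !andb_natr.
transitivity ((i == i')%:R * (j == j')%:R *
   \sum_a (p == a)%:R * \sum_b (q == b)%:R * Y a b).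
  rewrite big_distrr; apply: eq_bigr => a _ /=.
  rewrite !big_distrr; apply: eq_bigr => b _ /=; ring.
congr (_ * _).
under eq_bigr do rewrite (sum_dlt' q (Y _)).
exact: (sum_dlt' p (fun a => Y a q)).
Qed.

Lemma ampl_entry k n m (f : Mat n -> Mat m) (X : Mat (k * n)) i j p q :
  ampl f X (mxvec_index i p) (mxvec_index j q) = f (blk X i j) p q.
Proof.
rewrite /ampl summxE; under eq_bigr do rewrite summxE.
under eq_bigr do under eq_bigr do rewrite embblk_entry.
transitivity (\sum_(i' < k) (i == i')%:R * \sum_(j' < k) (j == j')%:R * f (blk X i' j') p q).
  apply: eq_bigr => i' _; rewrite big_distrr; apply: eq_bigr => j' _ /=; ring.
by rewrite sum_dlt' sum_dlt'.
Qed.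

Definition om h : 'I_(h * h) -> algC := fun p => (mxvec (1%:M : Mat h)) 0 p.
Definition Omg h : Mat (h * h) := R1 (om h).

Lemma blk_Omg h (i j : 'I_h) : blk (Omg h) i j = delta_mx i j.
Proof.
apply/matrixP => a b; rewrite !mxE /om !mxvecE !mxE rmorph_nat andb_natr.
by rewrite ![(_ == a)]eq_sym ![(_ == b)]eq_sym.
Qed.

Lemma posf_ext (T : finType) (P P' : T -> T -> algC) :
  (forall s t, P s t = P' s t) -> posf P -> posf P'.
Proof.
move=> e pos w; have := pos w; congr (0 <= _).
by apply: eq_bigr => s _; apply: eq_bigr => t _; rewrite e.
Qed.

Lemma posf_reindex (T T' : finType) (g : T' -> T) (P : T -> T -> algC) :
  bijective g -> posf P -> posf (fun s t => P (g s) (g t)).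
Proof.
move=> [g' gK g'K] pos w; have := pos (fun s => w (g' s)).
have bij : {on [pred i | true], bijective g} by apply: onW_bij; exists g'.
rewrite /form (reindex g bij) /=; congr (0 <= _).
apply: eq_bigr => s _; rewrite (reindex g bij) /=.
by apply: eq_bigr => t _; rewrite !gK.
Qed.

Definition phi3 h k v (s : ('I_h * 'I_k) * 'I_v) : 'I_(h * (k * v)) :=
  mxvec_index s.1.1 (mxvec_index s.1.2 s.2).

Lemma phi3_bij h k v : bijective (@phi3 h k v).
Proof.
apply: inj_card_bij; last by rewrite !card_prod !card_ord mulnA.
move=> [[i a] b] [[j a'] b'] /mxvec_index_inj [/= -> /mxvec_index_inj [-> ->]].
by [].
Qed.

Lemma cp_posf h k v (f : Mat h -> Mat (k * v)) : cp f ->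
  posf (fun s t : ('I_h * 'I_k) * 'I_v =>
    f (delta_mx s.1.1 t.1.1) (mxvec_index s.1.2 s.2) (mxvec_index t.1.2 t.2)).
Proof.
move=> hcp; have /psd_posf := hcp h (Omg h) (psd_R1 _ _).
move/(posf_reindex _ _ _ _ (phi3_bij h k v)); apply: posf_ext => s t.
by rewrite /phi3 ampl_entry blk_Omg.
Qed.

Lemma form_pair (TA : finType) v (P : TA * 'I_v -> TA * 'I_v -> algC) w z :
  form P w z =
  \sum_a \sum_b \sum_a' \sum_b' (w (a, b))^* * P (a, b) (a', b') * z (a', b').
Proof.
rewrite [RHS]pair_big /=; apply: eq_bigr => -[a b] _ /=.
by rewrite [RHS]pair_big /=; apply: eq_bigr => -[a' b'] _.
Qed.

Section Core.
Variables (TA Y : finType) (v : nat) (c : TA -> algC).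
Variable P : Y -> TA * 'I_v -> TA * 'I_v -> algC.
Hypothesis pos : forall y, posf (P y).
Hypothesis marg : forall a a',
  \sum_y \sum_b P y (a, b) (a', b) = c a * (c a')^*.

Definition ub (u : TA -> algC) (b : 'I_v) : TA * 'I_v -> algC :=
  fun s => u s.1 * (s.2 == b)%:R.

Lemma form_ub y u b :
  form (P y) (ub u b) (ub u b) =
  \sum_a \sum_a' (u a)^* * P y (a, b) (a', b) * u a'.
Proof.
rewrite form_pair; apply: eq_bigr => a _.
transitivity (\sum_b1 (b1 == b)%:R * \sum_a' \sum_b2 (b2 == b)%:R *
   ((u a)^* * P y (a, b1) (a', b2) * u a')).
  apply: eq_bigr => b1 _; rewrite big_distrr; apply: eq_bigr => a' _ /=.
  rewrite big_distrr; apply: eq_bigr => b2 _ /=.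
  rewrite /ub rmorphM rmorph_nat /=; ring.
rewrite sum_dlt; apply: eq_bigr => a' _; exact: sum_dlt.
Qed.

Lemma step1 u : \sum_a (u a)^* * c a = 0 ->
  forall y b z, form (P y) z (ub u b) = 0 /\ form (P y) (ub u b) z = 0.
Proof.
move=> hS.
have hsum : \sum_y \sum_b form (P y) (ub u b) (ub u b) = 0.
  under eq_bigr do under eq_bigr do rewrite form_ub.
  transitivity (\sum_a \sum_a' (u a)^* * u a' * (c a * (c a')^*)); last first.
    transitivity ((\sum_a (u a)^* * c a) * (\sum_a (u a)^* * c a)^*); last first.
      by rewrite hS mul0r.
    rewrite rmorph_sum big_distrl; apply: eq_bigr => a _ /=.
    rewrite big_distrr; apply: eq_bigr => a' _ /=.
    rewrite rmorphM /= (conjCK (u a')); ring.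
  under eq_bigr do rewrite exchange_big.
  rewrite exchange_big; apply: eq_bigr => a _ /=.
  under eq_bigr do rewrite exchange_big.
  rewrite exchange_big; apply: eq_bigr => a' _ /=.
  rewrite -marg big_distrr; apply: eq_bigr => y _ /=.
  rewrite big_distrr; apply: eq_bigr => b _ /=; ring.
move=> y b z.
have h1 : \sum_b form (P y) (ub u b) (ub u b) = 0.
  move/psumr_eq0P: hsum; apply => // y' _.
  by apply: sumr_ge0 => b' _; apply: pos.
have h2 : form (P y) (ub u b) (ub u b) = 0.
  by move/psumr_eq0P: h1; apply => // b' _; apply: pos.
have h3 := form_kernel (P y) (ub u b) (pos y) h2.
split; first exact: h3.
by rewrite formC ?h3 ?rmorph0 //.
Qed.

Lemma dlt_pair (a : TA) (b : 'I_v) s :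
  dlt (a, b) s = ub (dlt a) b s.
Proof. by case: s => a1 b1; rewrite /dlt /ub /= xpair_eqE andb_natr. Qed.

Lemma c_zero : (forall a, c a = 0) -> forall y s t, P y s t = 0.
Proof.
move=> c0 y s [a' b'].
have hS : \sum_a ((dlt a') a)^* * c a = 0 by apply: big1 => a _; rewrite c0 mulr0.
rewrite -form_dlt (form_ext _ _ _ _ (dlt s) (ub (dlt a') b')) //.
  by case: (step1 _ hS y b' (dlt s)).
by move=> t; rewrite dlt_pair.
Qed.

Definition sc := \sum_a c a * (c a)^*.
Definition cb (b : 'I_v) := ub c b.
Definition tau y b b' := form (P y) (cb b) (cb b') / (sc * sc).

Lemma sc_ge0 : 0 <= sc.
Proof. by apply: sumr_ge0 => a _; apply: mul_conjC_ge0. Qed.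

Lemma P_struct : sc != 0 -> forall y a b a' b',
  P y (a, b) (a', b') = c a * (c a')^* * tau y b b'.
Proof.
move=> s0 y a b a' b'.
have scc : sc^* = sc by apply: real_conj; apply: sc_ge0.
pose u (a0 : TA) : TA -> algC := fun a1 => dlt a0 a1 - (c a0)^* / sc * c a1.
have uo : forall a0, \sum_a (u a0 a)^* * c a = 0.
  move=> a0.
  have pt : forall a1, (u a0 a1)^* * c a1 = dlt a0 a1 * c a1 - c a0 / sc * (c a1 * (c a1)^*).
    move=> a1; rewrite /u /dlt !rmorphB !rmorphM /= !fmorphV /= scc rmorph_nat.
    have -> : (c a0)^*^* = c a0 by exact: conjCK.
    rewrite mulrBl; congr (_ - _); rewrite -!mulrA; congr (_ * (_ * _)); exact: mulrC.
  under eq_bigr do rewrite pt.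
  rewrite sumrB (sum_dlt a0 c) -big_distrr /= -/sc.
  by rewrite -mulrA mulVf // mulr1 subrr.
have decomp : forall a0 b0 s, dlt (a0, b0) s = (c a0)^* / sc * cb b0 s + ub (u a0) b0 s.
  move=> a0 b0 [a1 b1]; by rewrite dlt_pair /cb /ub /u /=; field.
rewrite -(form_dlt _ (P y) (a, b) (a', b')) (form_ext _ _ _ _ _ _ (decomp a b) (decomp a' b')).
rewrite formDl !formDr.
have L1 : forall z, form (P y) z (ub (u a') b') = 0.
  by move=> z; case: (step1 _ (uo a') y b' z).
have L2 : forall z, form (P y) (ub (u a) b) z = 0.
  by move=> z; case: (step1 _ (uo a) y b z).
rewrite !L1 !L2 !addr0.
rewrite /tau rmorphM fmorphV /= scc conjCK; field.
exact: s0.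
Qed.


Lemma sc_gt0 : sc != 0 -> 0 < sc.
Proof. by move=> s0; rewrite lt_def s0 sc_ge0. Qed.

Lemma tau_posf : sc != 0 -> forall y, posf (tau y).
Proof.
move=> s0 y w.
pose cw (s : TA * 'I_v) := c s.1 * w s.2.
have e : form (P y) cw cw = sc * sc * form (tau y) w w.
  rewrite form_pair.
  transitivity (\sum_a \sum_b \sum_a' \sum_b' (c a * (c a)^*) *
      ((c a' * (c a')^*) * ((w b)^* * tau y b b' * w b'))).
    apply: eq_bigr => a _; apply: eq_bigr => b _; apply: eq_bigr => a' _.
    apply: eq_bigr => b' _; rewrite P_struct // /cw /= rmorphM; ring.
  under eq_bigr do rewrite exchange_big.
  rewrite -mulrA big_distrl; apply: eq_bigr => a _ /=.
  rewrite big_distrl big_distrr; apply: eq_bigr => a' _ /=.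
  rewrite /form big_distrr /= big_distrr; apply: eq_bigr => b _ /=.
  rewrite big_distrr /= big_distrr; apply: eq_bigr => b' _ /=; ring.
have := pos y cw; rewrite e pmulr_rge0 //.
by apply: mulr_gt0; apply: sc_gt0.
Qed.

Lemma sum_tau : sc != 0 -> \sum_y \sum_b tau y b b = 1.
Proof.
move=> s0.
have [a0 ca0] : exists a0, c a0 != 0.
  case: (pickP (fun a => c a != 0)) => [a0 h|h]; first by exists a0.
  exfalso; move/negP: s0; apply; apply/eqP; apply: big1 => a _.
  by move: (h a) => /= /negbFE /eqP ->; rewrite mul0r.
have m := marg a0 a0.
have nz : c a0 * (c a0)^* != 0 by rewrite mul_conjC_eq0.
apply: (mulfI nz); rewrite mulr1 -{2}m big_distrr; apply: eq_bigr => y _ /=.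
rewrite big_distrr; apply: eq_bigr => b _ /=; rewrite P_struct //.
Qed.

End Core.

Lemma linmap_ptr1 k v : linmap (@ptr1 k v).
Proof.
move=> a A B; apply/matrixP => p q; rewrite !mxE big_distrr -big_split /=.
by apply: eq_bigr => i _; rewrite !mxE.
Qed.

Lemma linmap_ptr2 k v : linmap (@ptr2 k v).
Proof.
move=> a A B; apply/matrixP => p q; rewrite !mxE big_distrr -big_split /=.
by apply: eq_bigr => i _; rewrite !mxE.
Qed.


Lemma KXK_entry k h (K : 'M[algC]_(k, h)) (X : Mat h) a a' :
  (K *m X *m adjmx K) a a' = \sum_i \sum_j K a i * X i j * (K a' j)^*.
Proof.
rewrite mxE; under eq_bigr do rewrite !mxE big_distrl /=.
rewrite exchange_big /=; apply: eq_bigr => i _; apply: eq_bigr => j _.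
by [].
Qed.

Lemma KEK_entry k h (K : 'M[algC]_(k, h)) i j a a' :
  (K *m delta_mx i j *m adjmx K) a a' = K a i * (K a' j)^*.
Proof.
rewrite KXK_entry.
transitivity (\sum_i0 (i0 == i)%:R * (K a i0 * \sum_j0 (j0 == j)%:R * (K a' j0)^*)).
  apply: eq_bigr => i0 _; rewrite big_distrr /= big_distrr; apply: eq_bigr => j0 _ /=.
  rewrite delta_mxE; ring.
by rewrite sum_dlt sum_dlt.
Qed.

Lemma state_E0 v (b0 : 'I_v) : state (R1 (dlt b0)).
Proof.
split; first exact: psd_R1.
rewrite tr_R1; under eq_bigr do rewrite /dlt rmorph_nat.
by rewrite (sum_dlt b0 (fun p => (p == b0)%:R)) eqxx.
Qed.

Lemma psd_tr0 v (M : Mat v) : psd M -> \tr M = 0 -> M = 0.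
Proof.
move=> /psd_posf pos t0.
have d0 : forall b, M b b = 0.
  move=> b; move/psumr_eq0P: t0; apply => // b' _.
  by have := pos (dlt b'); rewrite form_dlt.
apply/matrixP => p q; rewrite mxE -(form_dlt _ (fun p q => M p q)).
have h0 : form (fun p q => M p q) (dlt q) (dlt q) = 0 by rewrite form_dlt d0.
exact: (form_kernel _ _ pos h0).
Qed.

Lemma ptr1_G h k v (F : Mat h -> Mat (k * v)) (rho : Mat h) b b' :
  linmap F ->
  ptr1 (F rho) b b' =
  \sum_a \sum_i \sum_j rho i j * F (delta_mx i j) (mxvec_index a b) (mxvec_index a b').
Proof.
move=> hF; rewrite mxE; apply: eq_bigr => a _.
rewrite (lin_expand _ _ _ hF) summxE; apply: eq_bigr => i _.
by rewrite summxE; apply: eq_bigr => j _; rewrite mxE.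
Qed.

Lemma per_x (Lambda : finType) h k v (K : 'M[algC]_(k, h))
  (G : Lambda -> Mat h -> Mat (k * v)) :
  (forall y, linmap (G y)) -> (forall y, cp (G y)) ->
  (forall i j, \sum_y ptr2 (G y (delta_mx i j)) = K *m delta_mx i j *m adjmx K) ->
  forall (y0 : Lambda) (b0 : 'I_v),
  exists (nu : Lambda -> algC) (xi : Lambda -> Mat v),
    (forall y, state (xi y)) /\ (forall y, 0 <= nu y) /\ \sum_y nu y = 1 /\
    forall y rho, ptr1 (G y rho) = (nu y * \tr (K *m rho *m adjmx K)) *: xi y.
Proof.
move=> hlin hcp hmarg y0 b0.
pose P : Lambda -> ('I_h * 'I_k) * 'I_v -> ('I_h * 'I_k) * 'I_v -> algC := fun y s t =>
    G y (delta_mx s.1.1 t.1.1) (mxvec_index s.1.2 s.2) (mxvec_index t.1.2 t.2).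
pose c : 'I_h * 'I_k -> algC := fun al => K al.2 al.1.
have pos : forall y, posf (P y) by move=> y; exact: cp_posf.
have marg : forall al al', \sum_y \sum_b P y (al, b) (al', b) = c al * (c al')^*.
  move=> [i a] [j a'] /=.
  have := congr1 (fun M : Mat k => M a a') (hmarg i j).
  rewrite /= KEK_entry summxE => <-.
  by apply: eq_bigr => y _; rewrite mxE.
have ptrE : forall y rho b b', ptr1 (G y rho) b b' =
   \sum_a \sum_i \sum_j rho i j * P y ((i, a), b) ((j, a), b').
  by move=> y rho b b'; apply: ptr1_G.
have trE : forall rho, \tr (K *m rho *m adjmx K) =
    \sum_a \sum_i \sum_j rho i j * (c (i, a) * (c (j, a))^*).
  move=> rho; apply: eq_bigr => a _; rewrite KXK_entry; apply: eq_bigr => i _.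
  by apply: eq_bigr => j _; rewrite /c /=; ring.
case: (eqVneq (sc _ c) 0) => [s0|s0].
  have c0 : forall al, c al = 0.
    move=> al; move/psumr_eq0P: s0 => h0.
    have /eqP := h0 (fun a _ => mul_conjC_ge0 (c a)) al isT.
    by rewrite mul_conjC_eq0 => /eqP.
  have P0 := c_zero _ _ _ _ _ pos marg c0.
  exists (fun y => (y == y0)%:R), (fun=> R1 (dlt b0)).
  split; first by move=> y; apply: state_E0.
  split; first by move=> y; rewrite ler0n.
  split.
    under eq_bigr do rewrite -[_%:R]mulr1.
    by rewrite (sum_dlt y0 (fun _ => 1)).
  move=> y rho; rewrite trE; transitivity (0 : Mat v).
    apply/matrixP => b b'; rewrite ptrE mxE big1 // => a _.
    rewrite big1 // => i _; rewrite big1 // => j _; by rewrite P0 mulr0.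
  rewrite big1 ?mulr0 ?scale0r // => a _; rewrite big1 // => i _.
  by rewrite big1 // => j _; rewrite !c0 rmorph0 !mulr0.
pose tm y : Mat v := \matrix_(b, b') tau _ _ _ c P y b b'.
have tpsd : forall y, psd (tm y).
  move=> y; apply/psd_posf.
  apply: (posf_ext _ (tau _ _ _ c P y)); first by move=> s t; rewrite mxE.
  exact: (tau_posf _ _ _ _ _ pos marg s0 y).
pose nu y := \tr (tm y).
have nu0 : forall y, 0 <= nu y.
  move=> y; apply: sumr_ge0 => b _; have /psd_posf p := tpsd y.
  by have := p (dlt b); rewrite form_dlt.
exists nu, (fun y => if nu y == 0 then R1 (dlt b0) else (nu y)^-1 *: tm y).
split.
  move=> y; case: ifP => [_|/negbT n0]; first exact: state_E0.
  split; last by rewrite mxtraceZ mulVf.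
  apply/psd_posf => u; rewrite form_scale mulr_ge0 ?invr_ge0 //.
  by have /psd_posf := tpsd y; apply.
split; first exact: nu0.
split.
  rewrite -(sum_tau _ _ _ _ _ pos marg s0); apply: eq_bigr => y _.
  by apply: eq_bigr => b _; rewrite mxE.
move=> y rho.
have e1 : ptr1 (G y rho) = \tr (K *m rho *m adjmx K) *: tm y.
  apply/matrixP => b b'; rewrite ptrE trE !mxE big_distrl; apply: eq_bigr => a _ /=.
  rewrite big_distrl; apply: eq_bigr => i _ /=; rewrite big_distrl; apply: eq_bigr => j _ /=.
  rewrite (P_struct _ _ _ _ _ pos marg s0); ring.
rewrite e1; case: ifP => [/eqP n0|/negbT n0].
  have -> : tm y = 0 by apply: psd_tr0.
  by rewrite n0 mul0r scale0r scaler0.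
rewrite scalerA; congr (_ *: _); field; exact: n0.
Qed.

Lemma linmap_comp n m p (f : Mat n -> Mat m) (g : Mat m -> Mat p) :
  linmap f -> linmap g -> linmap (fun X => g (f X)).
Proof. by move=> hf hg a A B; rewrite hf hg. Qed.

Lemma linmap_sub n m (f g : Mat n -> Mat m) :
  linmap f -> linmap g -> linmap (fun X => f X - g X).
Proof. by move=> hf hg a A B; rewrite hf hg scalerBr opprD addrACA. Qed.

Theorem corollary6 (Omega Lambda : finType) (h k v : nat) (hpos : (0 < h)%N)
  (I : Omega -> Mat h -> Mat k) (A : Omega -> Mat h) :
  instrument I -> indecomposable I -> induced_povm I A ->
  forall J : Lambda -> Mat h -> Mat v,
    instrument J -> compatible I J ->
    exists (xi : Omega -> Lambda -> Mat v) (nu : Omega -> Lambda -> algC),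
      (forall x y, state (xi x y)) /\
      (forall x y, 0 <= nu x y) /\ (forall x, \sum_y nu x y = 1) /\
      (forall y (rho : Mat h), state rho ->
         J y rho = \sum_x \tr (nu x y *: (A x *m rho)) *: xi x y).
Proof.
move=> hI hind hA J hJ [G [hG [hGJ hGI]]].
have trJ := (proj2 hJ) 1%:M.
have hn0 : (h%:R : algC) != 0 by rewrite pnatr_eq0 -lt0n.
have [y0 _] : exists y0 : Lambda, True.
  case: (pickP (fun _ : Lambda => true)) => [y0 _|none]; first by exists y0.
  exfalso; move: trJ; rewrite big1 ?mxtrace0 ?mxtrace1 => [e|y _].
    by move/eqP: hn0; rewrite -e.
  by have := none y.
have [b0 _] : exists b0 : 'I_v, True.
  case: (pickP (fun _ : 'I_v => true)) => [b0 _|none]; first by exists b0.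
  exfalso; move: trJ; rewrite mxtrace1 => e; move/eqP: hn0; rewrite -e.
  by apply; rewrite /mxtrace; apply: big1 => i _; have := none i.
have linG : forall xy, linmap (G xy) by move=> xy; case: (proj1 hG xy).
have cpG : forall xy, cp (G xy) by move=> xy; case: (proj1 hG xy).
have linI : forall x, linmap (I x) by move=> x; case: (proj1 hI x).
have perx : forall x, exists p : 'M[algC]_(k, h) * ((Lambda -> algC) * (Lambda -> Mat v)),
   (forall rho, I x rho = p.1 *m rho *m adjmx p.1) /\
   (forall y, state (p.2.2 y)) /\ (forall y, 0 <= p.2.1 y) /\ \sum_y p.2.1 y = 1 /\
   (forall y rho, ptr1 (G (x, y) rho) = (p.2.1 y * \tr (p.1 *m rho *m adjmx p.1)) *: p.2.2 y).
  move=> x.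
  have [K hK] : exists K : 'M[algC]_(k, h), forall rho, I x rho = K *m rho *m adjmx K.
    case: (Classical_Prop.classic (exists rho, I x rho != 0)) => [ex|nex].
      exact: hind x ex.
    exists 0 => rho; rewrite !mul0mx.
    apply/eqP; apply/negPn/negP => ne; apply: nex; by exists rho.
  have hm : forall i j, \sum_y ptr2 (G (x, y) (delta_mx i j)) = K *m delta_mx i j *m adjmx K.
    move=> i j; rewrite -hK; apply/eqP; rewrite -subr_eq0; apply/eqP.
    pose f := fun X : Mat h => \sum_y ptr2 (G (x, y) X) - I x X.
    have lf : linmap f.
      apply: linmap_sub => //; apply: (linmap_sum _ _ _ (fun y X => ptr2 (G (x, y) X))).
      by move=> y; apply: linmap_comp => //; apply: linmap_ptr2.
    apply: (lin_zero_states _ _ f lf) => rho hr.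
    by rewrite /f hGI // subrr.
  have [nu [xi [h1 [h2 [h3 h4]]]]] :=
    per_x _ _ _ _ K (fun y => G (x, y)) (fun y => linG (x, y)) (fun y => cpG (x, y)) hm y0 b0.
  by exists (K, (nu, xi)).
have [F hF] := IndefiniteDescription.functional_choice _ perx.
exists (fun x y => (F x).2.2 y), (fun x y => (F x).2.1 y).
split; first by move=> x y; case: (hF x) => _ [].
split; first by move=> x y; case: (hF x) => _ [_ []].
split; first by move=> x; case: (hF x) => _ [_ [_ []]].
move=> y rho hr; rewrite -hGJ //; apply: eq_bigr => x _.
case: (hF x) => hK [_ [_ [_ hP]]].
by rewrite hP mxtraceZ hA // hK.
Qed.
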